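(* For each $s\in\{2,3,4\}$ we have $L_s(r)>0$ for all real $r\in(2,\infty)$. Furthermore, for $s\in\{3,4\}$ we also have $L_s(2)>0$.
   Context: For an integer $s\ge2$ and real $r\ge2$ (with $rs-r-s>0$), define \[ L_s(r)=L(r,s)=\frac rs\log(s-1)+(r-1)\log(r-1)-\frac{rs-r-s}{s}\log r-\frac{rs-r-s}{s(s-1)}\log(rs-r-s). \] *)

(* Defs.v *)
From Stdlib Require Import Reals.
Open Scope R_scope.

Definition L (s : nat) (r : R) : R :=
  let sR := INR s in
  let q := r * sR - r - sR in
  r / sR * ln (sR - 1) + (r - 1) * ln (r - 1)
  - q / sR * ln r
  - q / (sR * (sR - 1)) * ln q.

(* Main.v *)
Require Import Defs.
From Stdlib Require Import Reals Lra Psatz.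
From Coquelicot Require Import Coquelicot.
Open Scope R_scope.
Lemma mono0 (f df : R -> R) (x : R) : 0 <= x ->
  (forall t, 0 <= t <= x -> is_derive f t (df t)) ->
  (forall t, 0 <= t <= x -> 0 <= df t) -> f 0 <= f x.
Proof.
intros Hx Hd Hp.
destruct (MVT_gen f 0 x df) as [c [Hc Heq]].
- intros t Ht. rewrite Rmin_left in Ht by lra. rewrite Rmax_right in Ht by lra. apply Hd; lra.
- intros t Ht. rewrite Rmin_left in Ht by lra. rewrite Rmax_right in Ht by lra.
  apply derivable_continuous_pt. exists (df t). apply is_derive_Reals. apply Hd; lra.
- rewrite Rmin_left in Hc by lra. rewrite Rmax_right in Hc by lra.
  assert (0 <= df c) by (apply Hp; lra). nra.
Qed.

Lemma lnA (x : R) : 0 <= x -> ln (1 + x) <= x * (6 + x) / (6 + 4 * x).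
Proof.
intros Hx.
assert (H := mono0 (fun t => t * (6 + t) / (6 + 4 * t) - ln (1 + t))
  (fun t => ((4*t^2+12*t+36) * (1+t) - (6+4*t)^2) / ((6+4*t)^2 * (1+t))) x Hx).
simpl in H. replace (1+0) with 1 in H by ring. rewrite ln_1 in H.
assert (0 <= x * (6 + x) / (6 + 4 * x) - ln (1 + x)); [|lra].
eapply Rle_trans; [|apply H].
- unfold Rdiv; lra.
- intros t Ht. auto_derive. lra. field. lra.
- intros t Ht. apply Rmult_le_pos. nra. left. apply Rinv_0_lt_compat. nra.
Qed.

Lemma lnB (x : R) : 0 <= x -> 2 * x / (2 + x) <= ln (1 + x).
Proof.
intros Hx.
assert (H := mono0 (fun t => ln (1 + t) - 2 * t / (2 + t))
  (fun t => t^2 / ((2+t)^2 * (1+t))) x Hx).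
simpl in H. replace (1+0) with 1 in H by ring. rewrite ln_1 in H.
assert (0 <= ln (1 + x) - 2 * x / (2 + x)); [|lra].
eapply Rle_trans; [|apply H].
- unfold Rdiv; lra.
- intros t Ht. auto_derive. lra. field. lra.
- intros t Ht. apply Rmult_le_pos. nra. left. apply Rinv_0_lt_compat. nra.
Qed.

Lemma lnu (u : R) : 1 <= u -> 2 * (u - 1) / (u + 1) <= ln u.
Proof. intros H. replace u with (1 + (u-1)) at 3 by ring.
replace (u+1) with (2 + (u-1)) by ring. apply lnB; lra. Qed.

Lemma key3 (u : R) : 1 <= u ->
  0 < ln 2 / 2 + ln u / 2 - (2*u-1)/3 * ln (1 + /u) + (2*u-1)/6 * ln (1 + /(2*u-1)).
Proof.
intros Hu.
assert (H2 : 2/3 <= ln 2).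
{ replace 2 with (1+1) at 2 by ring. assert (H := lnB 1 ltac:(lra)). lra. }
assert (Ha := lnu u Hu).
assert (Hp := lnA (/u) ltac:(apply Rlt_le, Rinv_0_lt_compat; lra)).
assert (Hm := lnB (/(2*u-1)) ltac:(apply Rlt_le, Rinv_0_lt_compat; lra)).
assert (Ep : /u * (6 + /u) / (6 + 4 * /u) = (6*u+1)/(u*(6*u+4))) by (field; lra).
assert (Em : 2 * /(2*u-1) / (2 + /(2*u-1)) = 2/(4*u-1)) by (field; lra).
rewrite Ep in Hp. rewrite Em in Hm.
assert (0 < 2*u-1) by lra.
apply Rmult_le_compat_l with (r := (2*u-1)/3) in Hp; [|lra].
apply Rmult_le_compat_l with (r := (2*u-1)/6) in Hm; [|lra].
assert (0 < 1/3 + (u-1)/(u+1) - (2*u-1)/3*((6*u+1)/(u*(6*u+4))) + (2*u-1)/6*(2/(4*u-1))); [|lra].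
replace (1/3 + (u-1)/(u+1) - (2*u-1)/3*((6*u+1)/(u*(6*u+4))) + (2*u-1)/6*(2/(4*u-1)))
 with ((u*(u+1)*(6*u+4)*(4*u-1) + 3*(u-1)*u*(6*u+4)*(4*u-1) - (2*u-1)*(6*u+1)*(u+1)*(4*u-1) + (2*u-1)*u*(u+1)*(6*u+4)) / (3*u*(u+1)*(6*u+4)*(4*u-1)))
 by (field; lra).
apply Rdiv_lt_0_compat.
- set (t := u - 1). replace u with (1+t) by (unfold t; ring). assert (0 <= t) by (unfold t; lra).
  ring_simplify. nra.
- apply Rmult_lt_0_compat; [|lra]. apply Rmult_lt_0_compat; [|lra]. apply Rmult_lt_0_compat; lra.
Qed.

Lemma key4 (u : R) : 1 <= u ->
  0 < ln 3 / 3 + ln u / 3 - (3*u-1)/4 * ln (1 + /u) + (3*u-1)/12 * ln (1 + /(3*u-1)).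
Proof.
intros Hu.
assert (H3 : 1 <= ln 3).
{ replace 3 with (1+2) by ring. assert (H := lnB 2 ltac:(lra)). lra. }
assert (Ha := lnu u Hu).
assert (Hp := lnA (/u) ltac:(apply Rlt_le, Rinv_0_lt_compat; lra)).
assert (Hm := lnB (/(3*u-1)) ltac:(apply Rlt_le, Rinv_0_lt_compat; lra)).
assert (Ep : /u * (6 + /u) / (6 + 4 * /u) = (6*u+1)/(u*(6*u+4))) by (field; lra).
assert (Em : 2 * /(3*u-1) / (2 + /(3*u-1)) = 2/(6*u-1)) by (field; lra).
rewrite Ep in Hp. rewrite Em in Hm.
assert (0 < 3*u-1) by lra.
apply Rmult_le_compat_l with (r := (3*u-1)/4) in Hp; [|lra].
apply Rmult_le_compat_l with (r := (3*u-1)/12) in Hm; [|lra].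
assert (0 < 1/3 + 2*(u-1)/(u+1)/3 - (3*u-1)/4*((6*u+1)/(u*(6*u+4))) + (3*u-1)/12*(2/(6*u-1))); [|lra].
replace (1/3 + 2*(u-1)/(u+1)/3 - (3*u-1)/4*((6*u+1)/(u*(6*u+4))) + (3*u-1)/12*(2/(6*u-1)))
 with ((4*u*(u+1)*(6*u+4)*(6*u-1)+8*(u-1)*u*(6*u+4)*(6*u-1)-3*(3*u-1)*(6*u+1)*(u+1)*(6*u-1)+2*(3*u-1)*u*(u+1)*(6*u+4)) / (12*u*(u+1)*(6*u+4)*(6*u-1)))
 by (field; lra).
apply Rdiv_lt_0_compat.
- set (t := u - 1). replace u with (1+t) by (unfold t; ring). assert (0 <= t) by (unfold t; lra).
  ring_simplify. nra.
- apply Rmult_lt_0_compat; [|lra]. apply Rmult_lt_0_compat; [|lra]. apply Rmult_lt_0_compat; lra.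
Qed.
Lemma L3 r : 2 <= r -> 0 < L 3 r.
Proof.
intros Hr. unfold L. cbv zeta. replace (INR 3) with 3 by (simpl; ring).
set (u := r - 1). assert (Hu : 1 <= u) by (unfold u; lra).
replace r with (u+1) by (unfold u; ring).
replace ((u + 1) * 3 - (u + 1) - 3) with (2*u-1) by ring.
replace (3-1) with 2 by ring.
assert (Eb : ln (u+1) = ln u + ln (1 + /u)).
{ assert (0 < /u) by (apply Rinv_0_lt_compat; lra).
  rewrite <- ln_mult by lra. f_equal. field. lra. }
assert (Ec : ln (2*u-1) + ln (1 + /(2*u-1)) = ln 2 + ln u).
{ rewrite <- !ln_mult; try lra. f_equal. field. lra. 
  assert (0 < /(2*u-1)) by (apply Rinv_0_lt_compat; lra). lra. }
replace (u+1-1) with u by ring.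
assert (K := key3 u Hu).
rewrite Eb.
replace (ln (2*u-1)) with (ln 2 + ln u - ln (1 + /(2*u-1))) by lra.
replace ((u + 1) / 3 * ln 2 + u * ln u - (2 * u - 1) / 3 * (ln u + ln (1 + / u)) -
 (2 * u - 1) / (3 * 2) * (ln 2 + ln u - ln (1 + / (2 * u - 1))))
 with (ln 2 / 2 + ln u / 2 - (2*u-1)/3 * ln (1 + /u) + (2*u-1)/6 * ln (1 + /(2*u-1))) by field.
exact K.
Qed.

Lemma L4 r : 2 <= r -> 0 < L 4 r.
Proof.
intros Hr. unfold L. cbv zeta. replace (INR 4) with 4 by (simpl; ring).
set (u := r - 1). assert (Hu : 1 <= u) by (unfold u; lra).
replace r with (u+1) by (unfold u; ring).
replace ((u + 1) * 4 - (u + 1) - 4) with (3*u-1) by ring.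
replace (4-1) with 3 by ring.
assert (Eb : ln (u+1) = ln u + ln (1 + /u)).
{ assert (0 < /u) by (apply Rinv_0_lt_compat; lra).
  rewrite <- ln_mult by lra. f_equal. field. lra. }
assert (Ec : ln (3*u-1) + ln (1 + /(3*u-1)) = ln 3 + ln u).
{ rewrite <- !ln_mult; try lra. f_equal. field. lra. 
  assert (0 < /(3*u-1)) by (apply Rinv_0_lt_compat; lra). lra. }
replace (u+1-1) with u by ring.
assert (K := key4 u Hu).
rewrite Eb.
replace (ln (3*u-1)) with (ln 3 + ln u - ln (1 + /(3*u-1))) by lra.
replace ((u + 1) / 4 * ln 3 + u * ln u - (3 * u - 1) / 4 * (ln u + ln (1 + / u)) -
 (3 * u - 1) / (4 * 3) * (ln 3 + ln u - ln (1 + / (3 * u - 1))))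
 with (ln 3 / 3 + ln u / 3 - (3*u-1)/4 * ln (1 + /u) + (3*u-1)/12 * ln (1 + /(3*u-1))) by field.
exact K.
Qed.

Lemma L2 r : 2 < r -> 0 < L 2 r.
Proof.
intros Hr. unfold L. cbv zeta. replace (INR 2) with 2 by (simpl; ring).
replace (r * 2 - r - 2) with (r-2) by ring. replace (2-1) with 1 by ring. rewrite ln_1.
assert (H1 : ln r + ln (r-2) < 2 * ln (r-1)).
{ rewrite <- ln_mult by lra. replace (2 * ln (r-1)) with (ln ((r-1)*(r-1))).
  apply ln_increasing; nra. rewrite ln_mult by lra. ring. }
assert (H2 : 0 < ln (r-1)). { rewrite <- ln_1. apply ln_increasing; lra. }
replace (r / 2 * 0 + (r - 1) * ln (r - 1) - (r - 2) / 2 * ln r - (r - 2) / (2 * 1) * ln (r - 2))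
 with ((r-1) * ln (r-1) - (r-2)/2 * (ln r + ln (r-2))) by field.
assert ((r-2)/2 * (ln r + ln (r-2)) <= (r-2)/2 * (2 * ln (r-1))).
{ apply Rmult_le_compat_l; lra. }
nra.
Qed.

Theorem lemma6p1 :
  (forall (s : nat), (s = 2 \/ s = 3 \/ s = 4)%nat ->
     forall r : R, 2 < r -> 0 < L s r) /\
  (forall (s : nat), (s = 3 \/ s = 4)%nat -> 0 < L s 2).
Proof.
split.
- intros s [ -> | [ -> | -> ] ] r Hr.
  + apply L2; lra.
  + apply L3; lra.
  + apply L4; lra.
- intros s [ -> | -> ].
  + apply L3; lra.
  + apply L4; lra.
Qed.
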